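(* Suppose that $G \leq \mathrm{Homeo}^+(\mathbb{R})$ acts on $\mathbb{R}$ with no fixed points, and that $G^0 \neq 1$. Let $\Omega$ be a set on which $G$ acts faithfully and $2$-transitively. Then at least one of the following happens: (1) $G^0$ is regular on $\Omega$; (2) for every $x \in \mathbb{R}$, for every orbit $O^- \subset \Omega$ of $G_x^-$ and every orbit $O^+ \subset \Omega$ of $G_x^+$, we have $|O^- \cap O^+| \leq 1$.
   Context: $\mathrm{Homeo}^+(\mathbb{R})$ is the group of orientation-preserving homeomorphisms of $\mathbb{R}$. $G^0$ denotes the subgroup of compactly supported elements of $G$. For $x \in \mathbb{R}$, $G_x$ is the stabilizer of $x$ in $G$, and $G_x^-$, $G_x^+$ are the subgroups of $G_x$ consisting of elements supported in $(-\infty, x]$ and $[x, +\infty)$ respectively (i.e. acting trivially outside these sets). A permutation group is regular if it is transitive and all point stabilizers are trivial. $2$-transitive means transitive on ordered pairs of distinct elements. *)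

(* Defs.v *)
From Stdlib Require Import Reals.
Open Scope R_scope.

(* Orientation-preserving homeomorphisms of R: continuous bijections
   that are strictly increasing (the inverse of such a map is then
   automatically continuous). *)
Definition is_homeo_plus (f : R -> R) : Prop :=
  continuity f /\
  (forall x y, x < y -> f x < f y) /\
  (forall y, exists x, f x = y).

(* G, given as a predicate on functions R -> R, is a subgroup of Homeo^+(R).
   Group elements are compared pointwise. *)
Definition subgroup_homeo_plus (G : (R -> R) -> Prop) : Prop :=
  (forall f, G f -> is_homeo_plus f) /\
  G (fun x => x) /\
  (forall f g, G f -> G g -> G (fun x => f (g x))) /\
  (forall f, G f -> exists g, G g /\ (forall x, f (g x) = x) /\ (forall x, g (f x) = x)).

Definition no_fixed_points (G : (R -> R) -> Prop) : Prop :=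
  forall x, exists g, G g /\ g x <> x.

Definition is_identity (g : R -> R) : Prop := forall x, g x = x.

Definition compactly_supported (g : R -> R) : Prop :=
  exists a b, forall y, (y < a \/ b < y) -> g y = y.

Definition G0 (G : (R -> R) -> Prop) (g : R -> R) : Prop :=
  G g /\ compactly_supported g.

Definition Gxm (G : (R -> R) -> Prop) (x : R) (g : R -> R) : Prop :=
  G g /\ g x = x /\ (forall y, x < y -> g y = y).

Definition Gxp (G : (R -> R) -> Prop) (x : R) (g : R -> R) : Prop :=
  G g /\ g x = x /\ (forall y, y < x -> g y = y).

Definition is_action (G : (R -> R) -> Prop) (Omega : Type)
  (act : (R -> R) -> Omega -> Omega) : Prop :=
  (forall w, act (fun x => x) w = w) /\
  (forall f g w, G f -> G g -> act (fun x => f (g x)) w = act f (act g w)).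

Definition faithful_action (G : (R -> R) -> Prop) (Omega : Type)
  (act : (R -> R) -> Omega -> Omega) : Prop :=
  forall g, G g -> (forall w, act g w = w) -> is_identity g.

Definition two_transitive (G : (R -> R) -> Prop) (Omega : Type)
  (act : (R -> R) -> Omega -> Omega) : Prop :=
  forall a b c d : Omega, a <> b -> c <> d ->
    exists g, G g /\ act g a = c /\ act g b = d.

Definition regular_on (H : (R -> R) -> Prop) (Omega : Type)
  (act : (R -> R) -> Omega -> Omega) : Prop :=
  (forall a b : Omega, exists h, H h /\ act h a = b) /\
  (forall h w, H h -> act h w = w -> is_identity h).

Definition orbit (H : (R -> R) -> Prop) (Omega : Type)
  (act : (R -> R) -> Omega -> Omega) (w : Omega) (z : Omega) : Prop :=
  exists h, H h /\ act h w = z.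

(* Main.v *)
Require Import Defs.
From Stdlib Require Import Reals.
From Stdlib Require Import Lra Classical FunctionalExtensionality.
Open Scope R_scope.

Lemma act_ext {Omega : Type} (act : (R -> R) -> Omega -> Omega) (f g : R -> R) w :
  (forall t, f t = g t) -> act f w = act g w.
Proof. intros H. assert (f = g) by (apply functional_extensionality; exact H). subst; reflexivity. Qed.

Lemma incr G f : subgroup_homeo_plus G -> G f -> forall x y, x < y -> f x < f y.
Proof. intros [Hh _] Gf. destruct (Hh f Gf) as [_ [Hi _]]. exact Hi. Qed.

Lemma act_cancel G Omega act f g w : is_action G Omega act -> G f -> G g ->
  (forall t, g (f t) = t) -> act g (act f w) = w.
Proof.
  intros [Hid Hc] Gf Gg Hgf.
  rewrite <- (Hc g f w Gg Gf).
  rewrite (act_ext act _ (fun x => x)) by exact Hgf.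
  apply Hid.
Qed.

Lemma act_inj G Omega act f u v : subgroup_homeo_plus G -> is_action G Omega act -> G f ->
  act f u = act f v -> u = v.
Proof.
  intros HG Ha Gf E.
  destruct HG as [_ [_ [_ Hinv]]].
  destruct (Hinv f Gf) as [g [Gg [H1 H2]]].
  rewrite <- (act_cancel G Omega act f g u Ha Gf Gg H2).
  rewrite <- (act_cancel G Omega act f g v Ha Gf Gg H2).
  rewrite E; reflexivity.
Qed.

Lemma act_comm G Omega act k h w : is_action G Omega act -> G k -> G h ->
  (forall t, k (h t) = h (k t)) -> act k (act h w) = act h (act k w).
Proof.
  intros [Hid Hc] Gk Gh Hkh.
  rewrite <- (Hc k h w Gk Gh). rewrite <- (Hc h k w Gh Gk).
  apply act_ext. exact Hkh.
Qed.

Lemma comm_pm G x k h : subgroup_homeo_plus G -> Gxp G x k -> Gxm G x h ->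
  forall t, k (h t) = h (k t).
Proof.
  intros HG [Gk [Hkx Hk]] [Gh [Hhx Hh]] t.
  destruct (Rtotal_order t x) as [lt|[eq|gt]].
  - assert (h t < x) by (rewrite <- Hhx; apply (incr G h HG Gh); exact lt).
    rewrite (Hk (h t) H), (Hk t lt). reflexivity.
  - subst. congruence.
  - assert (x < k t) by (rewrite <- Hkx; apply (incr G k HG Gk); exact gt).
    rewrite (Hh t gt), (Hh (k t) H). reflexivity.
Qed.

Definition eqp (G : (R -> R) -> Prop) {Omega : Type} (act : (R -> R) -> Omega -> Omega)
  (y : R) (c d : Omega) : Prop :=
  forall k, Gxp G y k -> (act k c = c <-> act k d = d).

Definition eqm (G : (R -> R) -> Prop) {Omega : Type} (act : (R -> R) -> Omega -> Omega)
  (y : R) (c d : Omega) : Prop :=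
  forall k, Gxm G y k -> (act k c = c <-> act k d = d).

Lemma eqp_mon G Omega (act : (R -> R) -> Omega -> Omega) y y' c d :
  y <= y' -> eqp G act y c d -> eqp G act y' c d.
Proof.
  intros Hle H k [Gk [Hky Hk]]. apply H. split; [exact Gk|split].
  - destruct (Rle_lt_or_eq_dec _ _ Hle) as [lt|eq]; [apply Hk; exact lt | subst; exact Hky].
  - intros t Ht. apply Hk. lra.
Qed.

Lemma eqm_mon G Omega (act : (R -> R) -> Omega -> Omega) y y' c d :
  y' <= y -> eqm G act y c d -> eqm G act y' c d.
Proof.
  intros Hle H k [Gk [Hky Hk]]. apply H. split; [exact Gk|split].
  - destruct (Rle_lt_or_eq_dec _ _ Hle) as [lt|eq]; [apply Hk; exact lt | subst; exact Hky].
  - intros t Ht. apply Hk. lra.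
Qed.

Lemma fix_iff G Omega act g u : subgroup_homeo_plus G -> is_action G Omega act -> G g ->
  forall v, (act g v = act g u <-> v = u).
Proof.
  intros HG Ha Gg v. split; [apply (act_inj G Omega act g); auto | intro E; rewrite E; reflexivity].
Qed.

Lemma eqp_transport G Omega act y c d g : subgroup_homeo_plus G -> is_action G Omega act -> G g ->
  eqp G act y c d -> eqp G act (g y) (act g c) (act g d).
Proof.
  intros HG Ha Gg H k [Gk [Hky Hk]].
  pose proof HG as [_ [_ [Hcomp Hinv]]].
  destruct (Hinv g Gg) as [gi [Ggi [Hggi Hgig]]].
  set (k' := fun t => gi (k (g t))).
  assert (Gk' : G k') by exact (Hcomp gi (fun t => k (g t)) Ggi (Hcomp k g Gk Gg)).
  assert (Hk' : Gxp G y k').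
  { split; [exact Gk'|split].
    - unfold k'. rewrite Hky. apply Hgig.
    - intros t Ht. unfold k'. rewrite (Hk (g t)); [apply Hgig|].
      apply (incr G g HG Gg). exact Ht. }
  assert (E : forall u, act k (act g u) = act g (act k' u)).
  { intro u. destruct Ha as [Hid Hc]. rewrite <- (Hc k g u Gk Gg), <- (Hc g k' u Gg Gk').
    apply act_ext. intro t. unfold k'. rewrite Hggi. reflexivity. }
  specialize (H k' Hk').
  rewrite !E, !(fix_iff G Omega act g _ HG Ha Gg). exact H.
Qed.

Lemma eqm_transport G Omega act y c d g : subgroup_homeo_plus G -> is_action G Omega act -> G g ->
  eqm G act y c d -> eqm G act (g y) (act g c) (act g d).
Proof.
  intros HG Ha Gg H k [Gk [Hky Hk]].
  pose proof HG as [_ [_ [Hcomp Hinv]]].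
  destruct (Hinv g Gg) as [gi [Ggi [Hggi Hgig]]].
  set (k' := fun t => gi (k (g t))).
  assert (Gk' : G k') by exact (Hcomp gi (fun t => k (g t)) Ggi (Hcomp k g Gk Gg)).
  assert (Hk' : Gxm G y k').
  { split; [exact Gk'|split].
    - unfold k'. rewrite Hky. apply Hgig.
    - intros t Ht. unfold k'. rewrite (Hk (g t)); [apply Hgig|].
      apply (incr G g HG Gg). exact Ht. }
  assert (E : forall u, act k (act g u) = act g (act k' u)).
  { intro u. destruct Ha as [Hid Hc]. rewrite <- (Hc k g u Gk Gg), <- (Hc g k' u Gg Gk').
    apply act_ext. intro t. unfold k'. rewrite Hggi. reflexivity. }
  specialize (H k' Hk').
  rewrite !E, !(fix_iff G Omega act g _ HG Ha Gg). exact H.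
Qed.

Lemma cfg_p G Omega act x h1 h2 w : subgroup_homeo_plus G -> is_action G Omega act ->
  Gxm G x h1 -> Gxm G x h2 -> eqp G act x (act h1 w) (act h2 w).
Proof.
  intros HG Ha H1 H2 k Hk.
  assert (F : forall h, Gxm G x h -> (act k (act h w) = act h w <-> act k w = w)).
  { intros h Hh. pose proof Hk as [Gk _]. pose proof Hh as [Gh _].
    rewrite (act_comm G Omega act k h w Ha Gk Gh (comm_pm G x k h HG Hk Hh)).
    apply (fix_iff G Omega act h w HG Ha Gh). }
  rewrite (F h1 H1), (F h2 H2). tauto.
Qed.

Lemma cfg_m G Omega act x h1 h2 w : subgroup_homeo_plus G -> is_action G Omega act ->
  Gxp G x h1 -> Gxp G x h2 -> eqm G act x (act h1 w) (act h2 w).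
Proof.
  intros HG Ha H1 H2 k Hk.
  assert (F : forall h, Gxp G x h -> (act k (act h w) = act h w <-> act k w = w)).
  { intros h Hh. pose proof Hk as [Gk _]. pose proof Hh as [Gh _].
    rewrite (act_comm G Omega act k h w Ha Gk Gh).
    - apply (fix_iff G Omega act h w HG Ha Gh).
    - intro t. symmetry. exact (comm_pm G x h k HG Hh Hk t). }
  rewrite (F h1 H1), (F h2 H2). tauto.
Qed.

Lemma final G Omega (act : (R -> R) -> Omega -> Omega) :
  (forall c d, c <> d -> exists y, eqp G act y c d /\ eqm G act y c d) ->
  forall a e1 e2 n1 n2 q1 p2,
  G n1 -> G n2 -> act n1 a = a -> act n2 a = a -> act n1 e1 <> e1 -> act n2 e2 <> e2 ->
  (forall t, q1 < t -> n1 t = t) -> (forall t, t < p2 -> n2 t = t) -> q1 < p2 -> False.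
Proof.
  intros HT a e1 e2 n1 n2 q1 p2 Gn1 Gn2 F1 F2 M1 M2 S1 S2 Hqp.
  assert (N1 : forall z, q1 < z -> ~ eqm G act z a e1).
  { intros z Hz E. apply M1. apply (E n1). split; [exact Gn1|split].
    - apply S1; exact Hz.
    - intros t Ht. apply S1. lra.
    - exact F1. }
  assert (N2 : forall z, z < p2 -> ~ eqp G act z a e2).
  { intros z Hz E. apply M2. apply (E n2). split; [exact Gn2|split].
    - apply S2; exact Hz.
    - intros t Ht. apply S2. lra.
    - exact F2. }
  assert (D1 : a <> e1) by (intro; subst; contradiction).
  destruct (HT a e1 D1) as [y1 [P1 Q1]].
  assert (Hy1 : y1 <= q1).
  { destruct (Rle_lt_dec y1 q1); auto. exfalso. apply (N1 y1); auto. }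
  destruct (classic (e1 = e2)) as [Heq|Hne].
  - subst. apply (N2 y1); [lra|exact P1].
  - destruct (HT e1 e2 Hne) as [y [P Q]].
    destruct (Rlt_le_dec y p2) as [Hy|Hy].
    + apply (N2 (Rmax y1 y)).
      * apply Rmax_lub_lt; lra.
      * intros k Hk.
        pose proof (eqp_mon G Omega act y1 (Rmax y1 y) a e1 (Rmax_l _ _) P1 k Hk).
        pose proof (eqp_mon G Omega act y (Rmax y1 y) e1 e2 (Rmax_r _ _) P k Hk).
        tauto.
    + assert (D2 : a <> e2) by (intro; subst; contradiction).
      destruct (HT a e2 D2) as [y2 [P2 Q2]].
      assert (Hy2 : p2 <= y2).
      { destruct (Rlt_le_dec y2 p2); auto. exfalso. apply (N2 y2); auto. }
      apply (N1 (Rmin y2 y)).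
      * apply Rmin_glb_lt; lra.
      * intros k Hk.
        pose proof (eqm_mon G Omega act y2 (Rmin y2 y) a e2 (Rmin_l _ _) Q2 k Hk).
        pose proof (eqm_mon G Omega act y (Rmin y2 y) e1 e2 (Rmin_r _ _) Q k Hk).
        tauto.
Qed.

Lemma unbounded G : subgroup_homeo_plus G -> no_fixed_points G ->
  forall p q, exists g, G g /\ q < g p.
Proof.
  intros HG Hnf p q.
  pose proof HG as [Hh [Hid [Hcomp Hinv]]].
  apply NNPP. intro Hno.
  assert (Hb : forall g, G g -> g p <= q).
  { intros g Gg. destruct (Rle_lt_dec (g p) q); auto. exfalso. apply Hno. eauto. }
  set (E := fun r => exists g, G g /\ r = g p).
  assert (HE : bound E) by (exists q; intros r [g [Gg ->]]; apply Hb; exact Gg).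
  assert (HEp : exists r, E r) by (exists p; exists (fun x => x); split; auto).
  destruct (completeness E HE HEp) as [s [Hub Hlub]].
  assert (Hle : forall f, G f -> f s <= s).
  { intros f Gf. destruct (Rle_lt_dec (f s) s) as [|Hlt]; auto. exfalso.
    destruct (Hinv f Gf) as [fi [Gfi [Hffi Hfif]]].
    assert (Hfi : fi s < s).
    { rewrite <- (Hfif s) at 2. apply (incr G fi HG Gfi). exact Hlt. }
    destruct (classic (exists r, E r /\ fi s < r)) as [[r [[g [Gg ->]] Hr]]|Hn].
    - assert (s < f (g p)).
      { rewrite <- (Hffi s). apply (incr G f HG Gf). exact Hr. }
      assert (f (g p) <= s) by (apply Hub; exists (fun x => f (g x)); split; auto).
      lra.
    - assert (s <= fi s).
      { apply Hlub. intros r Er. destruct (Rle_lt_dec r (fi s)); auto.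
        exfalso; apply Hn; eauto. }
      lra. }
  destruct (Hnf s) as [f [Gf Hfs]].
  apply Hfs.
  destruct (Hinv f Gf) as [fi [Gfi [Hffi Hfif]]].
  pose proof (Hle f Gf). pose proof (Hle fi Gfi).
  assert (s <= f s).
  { rewrite <- (Hffi s) at 1. destruct (Rle_lt_or_eq_dec _ _ H0) as [l|e].
    - left. apply (incr G f HG Gf). exact l.
    - rewrite e. right; reflexivity. }
  lra.
Qed.

Theorem proposition5p1 (G : (R -> R) -> Prop) (Omega : Type)
  (act : (R -> R) -> Omega -> Omega) :
  subgroup_homeo_plus G ->
  no_fixed_points G ->
  (exists g, G0 G g /\ ~ is_identity g) ->
  is_action G Omega act ->
  faithful_action G Omega act ->
  two_transitive G Omega act ->
  regular_on (G0 G) Omega act \/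
  (forall (x : R) (wm wp : Omega) (a b : Omega),
      orbit (Gxm G x) Omega act wm a -> orbit (Gxp G x) Omega act wp a ->
      orbit (Gxm G x) Omega act wm b -> orbit (Gxp G x) Omega act wp b ->
      a = b).
Proof.
  intros HG Hnf [n0 [[Gn0 [p0 [q0 Hs0]]] Hnid0]] Ha Hfaith H2.
  pose proof HG as [Hh [Hid [Hcomp Hinv]]].
  pose proof Ha as [Haid Hac].
  destruct (classic (regular_on (G0 G) Omega act)) as [R|NR]; [left; exact R|right].
  intros x wm wp a0 b0 [h1 [Hh1 E1]] [k1 [Hk1 F1]] [h2 [Hh2 E2]] [k2 [Hk2 F2]].
  destruct (classic (a0 = b0)) as [|Hab]; auto. exfalso. apply NR.
  assert (Cp : eqp G act x a0 b0) by (subst; apply cfg_p; auto).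
  assert (Cm : eqm G act x a0 b0) by (rewrite <- F1, <- F2; apply cfg_m; auto).
  assert (HT : forall c d, c <> d -> exists y, eqp G act y c d /\ eqm G act y c d).
  { intros c d Hcd. destruct (H2 a0 b0 c d Hab Hcd) as [g [Gg [Ec Ed]]].
    exists (g x). rewrite <- Ec, <- Ed. split.
    - apply eqp_transport; auto.
    - apply eqm_transport; auto. }
  assert (Conj : forall g h gi u, G g -> G h -> G gi ->
     act (fun t => g (h (gi t))) u = act g (act h (act gi u))).
  { intros g h gi u Gg Gh Ggi.
    rewrite <- (Hac h gi u Gh Ggi).
    exact (Hac g (fun t => h (gi t)) u Gg (Hcomp h gi Gh Ggi)). }
  split.
  - intros a b. destruct (classic (a = b)) as [<-|Hne].
    + exists (fun x => x). split; [split; [exact Hid| exists 0, 0; auto]| apply Haid].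
    + destruct (classic (exists c, act n0 c <> c)) as [[c Hc]|Hno].
      2:{ exfalso. apply Hnid0. apply Hfaith; auto. intro w. apply NNPP. intro. apply Hno; eauto. }
      destruct (H2 c (act n0 c) a b (fun e => Hc (eq_sym e)) Hne) as [g [Gg [Ega Egb]]].
      destruct (Hinv g Gg) as [gi [Ggi [Hggi Hgig]]].
      exists (fun t => g (n0 (gi t))). split.
      * split.
        -- exact (Hcomp g (fun t => n0 (gi t)) Gg (Hcomp n0 gi Gn0 Ggi)).
        -- exists (g p0), (g q0). intros y [Hy|Hy].
           ++ rewrite Hs0; [apply Hggi|]. left. rewrite <- (Hgig p0).
              apply (incr G gi HG Ggi). exact Hy.
           ++ rewrite Hs0; [apply Hggi|]. right. rewrite <- (Hgig q0).
              apply (incr G gi HG Ggi). exact Hy.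
      * rewrite Conj by auto. rewrite <- Ega.
        rewrite (act_cancel G Omega act g gi c Ha Gg Ggi Hgig). exact Egb.
  - intros h w [Gh [p [q Hsupp]]] Hfix.
    apply NNPP. intro Hnid.
    destruct (classic (exists e, act h e <> e)) as [[e He]|Hno].
    2:{ apply Hnid. apply Hfaith; auto. intro w'. apply NNPP. intro. apply Hno; eauto. }
    destruct (unbounded G HG Hnf p q) as [g [Gg Hgp]].
    destruct (Hinv g Gg) as [gi [Ggi [Hggi Hgig]]].
    set (h' := fun t => g (h (gi t))).
    assert (Gh' : G h') by exact (Hcomp g (fun t => h (gi t)) Gg (Hcomp h gi Gh Ggi)).
    assert (Sh' : forall t, t < g p -> h' t = t).
    { intros t Ht. unfold h'. rewrite Hsupp; [apply Hggi|]. left. rewrite <- (Hgig p).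
      apply (incr G gi HG Ggi). exact Ht. }
    assert (Sh : forall t, q < t -> h t = t) by (intros t Ht; apply Hsupp; right; exact Ht).
    assert (Fh' : act h' (act g w) = act g w).
    { unfold h'. rewrite Conj by auto. rewrite (act_cancel G Omega act g gi w Ha Gg Ggi Hgig).
      rewrite Hfix. reflexivity. }
    assert (Mh' : act h' (act g e) <> act g e).
    { unfold h'. rewrite Conj by auto. rewrite (act_cancel G Omega act g gi e Ha Gg Ggi Hgig).
      intro E. apply He. exact (act_inj G Omega act g _ _ HG Ha Gg E). }
    destruct (classic (w = act g w)) as [Ew|Nw].
    + apply (final G Omega act HT w e (act g e) h h' q (g p)); auto.
      rewrite Ew. exact Fh'.
    + destruct (HT w (act g w) Nw) as [y [Py My]].
      destruct (Rlt_le_dec y (g p)) as [Hy|Hy].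
      * assert (Fw : act h' w = w).
        { apply (Py h'). split; [exact Gh'|split].
          - apply Sh'. exact Hy.
          - intros t Ht. apply Sh'. lra.
          - exact Fh'. }
        apply (final G Omega act HT w e (act g e) h h' q (g p)); auto.
      * assert (Fw : act h (act g w) = act g w).
        { apply (My h). split; [exact Gh|split].
          - apply Sh. lra.
          - intros t Ht. apply Sh. lra.
          - exact Hfix. }
        apply (final G Omega act HT (act g w) e (act g e) h h' q (g p)); auto.
Qed.
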